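(* Let $A=(a_{ij})_{1\le i,j\le n}$ be a complex Nekrasov matrix, let $\epsilon_1,\dots,\epsilon_n$ be real numbers satisfying either the conditions (C1) or the conditions (C2) below, and let $S=\mathrm{diag}\left(\frac{h_i(A)+\epsilon_i}{|a_{ii}|}\right)_{i=1}^n$. Define $z_1(A):=1$ and $z_i(A):=\sum_{j=1}^{i-1}|a_{ij}|\frac{z_j(A)}{|a_{jj}|}+1$ for $i=2,\dots,n$. Then $$\|A^{-1}\|_\infty\le \max_{i\in N}\left(\frac{h_i(A)+\epsilon_i}{|a_{ii}|}\right)\,\max_{i\in N}\frac{z_i(A)}{h_i(A)+\epsilon_i-h_i(AS)},$$ where all denominators $h_i(A)+\epsilon_i-h_i(AS)$ are positive.
   Context: For a complex $n\times n$ matrix $A=(a_{ij})$ with $a_{ii}\ne 0$ for all $i$, define recursively $h_1(A):=\sum_{j\ne 1}|a_{1j}|$ and $h_i(A):=\sum_{j=1}^{i-1}|a_{ij}|\frac{h_j(A)}{|a_{jj}|}+\sum_{j=i+1}^{n}|a_{ij}|$ for $i=2,\dots,n$ (the same definition is applied to $AS$ to obtain $h_i(AS)$). $A$ is a Nekrasov matrix if $|a_{ii}|>h_i(A)$ for all $i\in N=\{1,\dots,n\}$. $\|\cdot\|_\infty$ is the maximum absolute row sum norm. Conditions (C1): $\epsilon_1>0$, and for $i=2,\dots,n$: $0<\epsilon_i\le |a_{ii}|-h_i(A)$ and $\epsilon_i>\sum_{j=1}^{i-1}\frac{|a_{ij}|\epsilon_j}{|a_{jj}|}$. Conditions (C2):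 let $k$ be the smallest index such that $a_{kj}=0$ for all $j>k$; $\epsilon_i=0$ for $i=1,\dots,k-1$, and for $i=k,\dots,n$: $0<\epsilon_i<|a_{ii}|-h_i(A)$ and $\epsilon_i>\sum_{j=k}^{i-1}\frac{|a_{ij}|\epsilon_j}{|a_{jj}|}$ (empty sum for $i=k$). *)

(* Defs.v *)
From HB Require Import structures.
From mathcomp Require Import all_boot all_order all_algebra.
From mathcomp Require Import complex.
From mathcomp Require Import reals.
Set Implicit Arguments. Unset Strict Implicit. Unset Printing Implicit Defensive.
Import Order.TTheory GRing.Theory Num.Theory.
Local Open Scope ring_scope.

Definition cmod (R : realType) (z : R[i]) : R :=
  Num.sqrt (complex.Re z ^+ 2 + complex.Im z ^+ 2).

(* Generic lower-recursive scheme (indices 0-based):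
     g_i = \sum_{j<i} |a_ij| g_j / |a_jj| + c_i.
   gfun k i is the value computed with recursion depth k; it is the correct
   value as soon as i < k (see gfun_stable / grec_eq below). *)
Fixpoint gfun (R : realType) (n : nat) (A : 'M[R[i]]_n) (c : 'I_n -> R)
    (k : nat) (i : 'I_n) : R :=
  match k with
  | 0 => 0
  | k'.+1 => \sum_(j < n | (j < i)%N) cmod (A i j) * gfun A c k' j / cmod (A j j)
             + c i
  end.

Definition grec (R : realType) (n : nat) (A : 'M[R[i]]_n) (c : 'I_n -> R)
    (i : 'I_n) : R := gfun A c n i.

(* h_i(A) = \sum_{j<i} |a_ij| h_j(A)/|a_jj| + \sum_{j>i} |a_ij|
   (for i = 1 in the paper's 1-based indexing this is \sum_{j<>1} |a_1j|) *)
Definition hA (R : realType) (n : nat) (A : 'M[R[i]]_n) : 'I_n -> R :=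
  grec A (fun i => \sum_(j < n | (i < j)%N) cmod (A i j)).

Definition zA (R : realType) (n : nat) (A : 'M[R[i]]_n) : 'I_n -> R :=
  grec A (fun _ => 1).

Definition nekrasov (R : realType) (n : nat) (A : 'M[R[i]]_n) : Prop :=
  forall i : 'I_n, hA A i < cmod (A i i).

Definition infnorm (R : realType) (n : nat) (B : 'M[R[i]]_n) : R :=
  \big[Num.max/0]_(i < n) \sum_(j < n) cmod (B i j).

Definition Smat (R : realType) (n : nat) (A : 'M[R[i]]_n) (eps : 'I_n -> R)
  : 'M[R[i]]_n :=
  diag_mx (\row_i (((hA A i + eps i) / cmod (A i i))%:C)%C).

(* Conditions (C1), 0-based: the paper's index 1 is our index 0. *)
Definition condC1 (R : realType) (n : nat) (A : 'M[R[i]]_n) (eps : 'I_n -> R)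
  : Prop :=
  (forall i : 'I_n, nat_of_ord i = 0%N -> 0 < eps i) /\
  (forall i : 'I_n, (0 < i)%N ->
     [/\ 0 < eps i, eps i <= cmod (A i i) - hA A i &
         \sum_(j < n | (j < i)%N) cmod (A i j) * eps j / cmod (A j j) < eps i]).

Definition condC2 (R : realType) (n : nat) (A : 'M[R[i]]_n) (eps : 'I_n -> R)
  : Prop :=
  exists k : 'I_n,
    [/\ (forall j : 'I_n, (k < j)%N -> A k j = 0),
        (forall k' : 'I_n, (k' < k)%N -> exists j : 'I_n, (k' < j)%N /\ A k' j != 0),
        (forall i : 'I_n, (i < k)%N -> eps i = 0) &
        (forall i : 'I_n, (k <= i)%N ->
           [/\ 0 < eps i, eps i < cmod (A i i) - hA A i &
               \sum_(j < n | (k <= j < i)%N) cmod (A i j) * eps j / cmod (A j j)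
                 < eps i])].

Lemma gfun_stable (R : realType) (n : nat) (A : 'M[R[i]]_n) (c : 'I_n -> R)
  (k : nat) (i : 'I_n) : (i < k)%N -> gfun A c k i = gfun A c k.+1 i.
Proof.
elim: k i => [//|k IH] i lti /=; congr (_ + _); apply: eq_bigr => j ltji.
by rewrite IH // (leq_trans ltji).
Qed.

Lemma gfun_stable_le (R : realType) (n : nat) (A : 'M[R[i]]_n) (c : 'I_n -> R)
  (k m : nat) (i : 'I_n) : (i < k)%N -> (k <= m)%N -> gfun A c k i = gfun A c m i.
Proof.
move=> lti /subnK <-; elim: (m - k)%N => [//|d IH].
by rewrite addSn -gfun_stable // ?IH // ltn_addl.
Qed.

Lemma grec_eq (R : realType) (n : nat) (A : 'M[R[i]]_n) (c : 'I_n -> R)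
  (i : 'I_n) : grec A c i =
  \sum_(j < n | (j < i)%N) cmod (A i j) * grec A c j / cmod (A j j) + c i.
Proof.
rewrite /grec -(gfun_stable_le A c (ltnSn i) (ltn_ord i)) /=; congr (_ + _).
apply: eq_bigr => j ltji.
by rewrite (gfun_stable_le A c ltji (ltnW (ltn_ord i))).
Qed.

(* Main.v *)
Require Import Defs.
From HB Require Import structures.
From mathcomp Require Import all_boot all_order all_algebra.
From mathcomp Require Import complex.
From mathcomp Require Import reals.
From mathcomp Require Import ring lra.
Import Order.TTheory GRing.Theory Num.Theory.
Local Open Scope ring_scope.

Section Aux.
Variable R : realType.
Implicit Types z w : R[i].

Lemma cmodE z : ((cmod z)%:C)%C = `|z|.
Proof. by rewrite normc_def. Qed.

Lemma cmod_ge0 z : 0 <= cmod z.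
Proof. exact: sqrtr_ge0. Qed.

Lemma cmodM z w : cmod (z * w) = cmod z * cmod w.
Proof. by apply: (@complexI R); rewrite rmorphM /= !cmodE normrM. Qed.

Lemma cmodD z w : cmod (z + w) <= cmod z + cmod w.
Proof. by rewrite -lecR rmorphD /= !cmodE ler_normD. Qed.

Lemma cmodB z w : cmod (z - w) <= cmod z + cmod w.
Proof. by rewrite -lecR rmorphD /= !cmodE ler_normB. Qed.

Lemma cmod_normc z : cmod z = @Num.norm _ (Rcomplex R) z.
Proof. by case: z. Qed.

Lemma cmod_sum (I : finType) (P : pred I) (F : I -> R[i]) :
  cmod (\sum_(j | P j) F j) <= \sum_(j | P j) cmod (F j).
Proof.
rewrite (cmod_normc (\sum_(j | P j) F j)) (eq_bigr _ (fun j _ => cmod_normc (F j))).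
exact: (@ler_norm_sum R (Rcomplex R)).
Qed.

Lemma cmodR (a : R) : cmod (a%:C)%C = `|a|.
Proof. by rewrite /cmod /= expr0n /= addr0 sqrtr_sqr. Qed.

Lemma cmod_eq0 z : cmod z = 0 -> z = 0.
Proof. by move=> h; apply/normr0_eq0; rewrite -cmodE h. Qed.

Lemma bigmax_ge (I : eqType) (s : seq I) (F : I -> R) x0 :
  x0 \in s -> F x0 <= \big[Num.max/0]_(i <- s) F i.
Proof.
elim: s => [//|a s IH]; rewrite in_cons big_cons => /orP [/eqP ->|h].
  by rewrite le_max lexx.
by rewrite le_max IH // orbT.
Qed.

Lemma bigmax_ge0 (I : eqType) (s : seq I) (F : I -> R) :
  0 <= \big[Num.max/0]_(i <- s) F i.
Proof. elim: s => [|a s IH]; rewrite ?big_nil // big_cons le_max IH orbT //. Qed.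

Lemma bigmax_le (I : eqType) (s : seq I) (F : I -> R) M :
  0 <= M -> (forall i, F i <= M) -> \big[Num.max/0]_(i <- s) F i <= M.
Proof.
move=> M0 h; elim: s => [|a s IH]; rewrite ?big_nil // big_cons ge_max h IH //.
Qed.

Lemma max_cases (x y : R) : Num.max x y = x \/ Num.max x y = y.
Proof. rewrite /Order.max; case: ifP; auto. Qed.

Lemma bigmax_attain (I : eqType) (s : seq I) (F : I -> R) :
  \big[Num.max/0]_(i <- s) F i = 0 \/
  exists2 i, i \in s & \big[Num.max/0]_(i <- s) F i = F i.
Proof.
elim: s => [|a s IH]; first by left; rewrite big_nil.
rewrite big_cons; case: (max_cases (F a) (\big[Num.max/0]_(i <- s) F i)) => ->.
- by right; exists a => //; exact: mem_head.
- case: IH => [->|[i si ->]]; first by left.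
  by right; exists i; rewrite // in_cons si orbT.
Qed.

Lemma gfun_ge0 n (A : 'M[R[i]]_n) c k i : (forall j, 0 <= c j) -> 0 <= gfun A c k i.
Proof.
move=> c0; elim: k i => [|k IH] i //=.
apply: addr_ge0 => //; apply: sumr_ge0 => j _.
by apply: divr_ge0; [apply: mulr_ge0; [apply: cmod_ge0|apply: IH]|apply: cmod_ge0].
Qed.


Lemma split_sum n (i : 'I_n) (F : 'I_n -> R[i]) :
  \sum_j F j = \sum_(j : 'I_n | (j < i)%N) F j + F i + \sum_(j : 'I_n | (i < j)%N) F j.
Proof.
rewrite (bigD1 i) //= (bigID (fun j : 'I_n => (j < i)%N)) /= addrCA addrA.
congr (_ + _ + _); apply: eq_bigl => j.
  by case: (ltnP j i) => h; rewrite ?andbT ?andbF // neq_ltn h.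
by rewrite neq_ltn -leqNgt; case: (ltngtP j i).
Qed.

Lemma hA_ge0 n (B : 'M[R[i]]_n) i : 0 <= hA B i.
Proof. apply: gfun_ge0 => j; apply: sumr_ge0 => k _; exact: cmod_ge0. Qed.

Lemma zA_ge0 n (B : 'M[R[i]]_n) i : 0 <= zA B i.
Proof. by apply: gfun_ge0. Qed.

Section Nek.
Variables (n : nat) (B : 'M[R[i]]_n) (x y : 'I_n -> R[i]) (Y : R).
Hypothesis nek : forall i, hA B i < cmod (B i i).
Hypothesis eqB : forall i, \sum_j B i j * x j = y i.
Hypothesis yb : forall i, cmod (y i) <= Y.

Let m := \big[Num.max/0]_(i < n) cmod (x i).

Let m_ge i : cmod (x i) <= m.
Proof. have := @bigmax_ge _ (index_enum (ordinal n)) (fun i => cmod (x i)) i. rewrite mem_index_enum; by apply. Qed.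

Let m_ge0 : 0 <= m.
Proof. exact: bigmax_ge0. Qed.

Let d_gt0 j : 0 < cmod (B j j).
Proof. have := hA_ge0 _ B j; have := nek j; lra. Qed.

Lemma nek_claim i : cmod (B i i) * cmod (x i) <= hA B i * m + zA B i * Y.
Proof.
suff H : forall k (i : 'I_n), (i < k)%N ->
  cmod (B i i) * cmod (x i) <= hA B i * m + zA B i * Y by apply: (H n.+1 i); apply: leqW.
elim=> [//|k IH] {}i ltik.
have e := eqB i; rewrite (split_sum _ i) in e.
set S1 := \sum_(j : 'I_n | (j < i)%N) _ in e; set S2 := \sum_(j : 'I_n | (i < j)%N) _ in e.
have eB : B i i * x i = y i - (S1 + S2) by rewrite -e; ring.
set SX := \sum_(j : 'I_n | (j < i)%N) cmod (B i j) * hA B j / cmod (B j j).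
set SZ := \sum_(j : 'I_n | (j < i)%N) cmod (B i j) * zA B j / cmod (B j j).
set T := \sum_(j : 'I_n | (i < j)%N) cmod (B i j).
have hE : hA B i = SX + T by rewrite /hA grec_eq.
have zE : zA B i = SZ + 1 by rewrite /zA grec_eq.
have h1 : cmod S1 <= m * SX + Y * SZ.
  apply: le_trans (cmod_sum _ _ _) _.
  rewrite /SX /SZ !mulr_sumr -big_split /=.
  apply: ler_sum => j ltji; rewrite cmodM.
  have ltj : (j < k)%N by apply: leq_trans ltji _.
  have IHj := IH j ltj.
  have hx : cmod (x j) <= (hA B j * m + zA B j * Y) / cmod (B j j).
    by rewrite ler_pdivlMr // mulrC.
  apply: le_trans (ler_wpM2l (cmod_ge0 _) hx) _.
  rewrite le_eqVlt; apply/orP; left; apply/eqP; field; exact: lt0r_neq0.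
have h2 : cmod S2 <= m * T.
  apply: le_trans (cmod_sum _ _ _) _.
  rewrite /T mulr_sumr; apply: ler_sum => j _; rewrite cmodM mulrC.
  by apply: ler_wpM2r; [apply: cmod_ge0|apply: m_ge].
have h3 : cmod (y i - (S1 + S2)) <= cmod (y i) + (cmod S1 + cmod S2).
  by apply: le_trans (cmodB _ _) _; rewrite lerD2l cmodD.
rewrite -cmodM eB hE zE.
have := yb i.
nra.
Qed.

Lemma nek_bound i :
  cmod (x i) <= \big[Num.max/0]_(j < n) (zA B j / (cmod (B j j) - hA B j)) * Y.
Proof.
have Y0 : 0 <= Y by apply: le_trans (cmod_ge0 _) (yb i).
set M := \big[Num.max/0]_(j < n) _.
have M0 : 0 <= M by apply: bigmax_ge0.
apply: le_trans (m_ge i) _.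
case: (bigmax_attain _ (index_enum 'I_n) (fun j => cmod (x j))) => [h|[i1 _ h]];
  have {}h : m = _ := h.
  by rewrite h; apply: mulr_ge0.
rewrite h.
have c := nek_claim i1; rewrite h in c.
have dh : 0 < cmod (B i1 i1) - hA B i1 by rewrite subr_gt0.
have : cmod (x i1) <= zA B i1 * Y / (cmod (B i1 i1) - hA B i1).
  by rewrite ler_pdivlMr //; nra.
move/le_trans; apply.
rewrite mulrAC; apply: ler_wpM2r => //.
have := @bigmax_ge _ (index_enum (ordinal n)) (fun j => zA B j / (cmod (B j j) - hA B j)) i1. by rewrite mem_index_enum; apply.
Qed.

End Nek.

Lemma cmod1 : cmod (1 : R[i]) = 1.
Proof. by rewrite /cmod /= expr1n expr0n /= addr0 sqrtr1. Qed.

Lemma cmod0 : cmod (0 : R[i]) = 0.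
Proof. by rewrite /cmod /= expr0n /= addr0 sqrtr0. Qed.

Section Main.
Variables (n : nat) (A : 'M[R[i]]_n) (eps : 'I_n -> R).
Hypothesis nek : nekrasov A.
Hypothesis hC : condC1 A eps \/ condC2 A eps.

Let d j := cmod (A j j).
Let s j := (hA A j + eps j) / d j.
Let B := A *m Smat A eps.

Let d_gt0 j : 0 < d j.
Proof. have := hA_ge0 _ A j; have := nek j; rewrite /d; lra. Qed.

Let eps_ge0 j : 0 <= eps j.
Proof.
case: hC => [[h0 h1]|[k [_ _ h2 h3]]].
- case: (posnP j) => hj; first by apply: ltW; apply: h0.
  by case: (h1 j hj) => /ltW.
- case: (ltnP j k) => hj; first by rewrite h2.
  by case: (h3 j hj) => /ltW.
Qed.

Let he_gt0 j : 0 < hA A j + eps j.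
Proof.
have hge := hA_ge0 _ A j.
case: hC => [[h0 h1]|[k [_ hk h2 h3]]].
- case: (posnP j) => hj; first by have := h0 j hj; lra.
  by case: (h1 j hj) => ? _ _; lra.
- case: (ltnP j k) => hj; last by case: (h3 j hj) => ? _ _; lra.
  rewrite h2 // addr0.
  case: (hk j hj) => l [ljl Al].
  rewrite /hA grec_eq.
  apply: lt_le_trans (_ : 0 < \sum_(l0 : 'I_n | (j < l0)%N) cmod (A j l0)) _.
    rewrite (bigD1 l) //=.
    have : 0 < cmod (A j l).
      rewrite lt0r cmod_ge0 andbT; apply/eqP => /cmod_eq0 h; by rewrite h eqxx in Al.
    have : 0 <= \sum_(i0 : 'I_n | (j < i0)%N && (i0 != l)) cmod (A j i0) by apply: sumr_ge0 => *; apply: cmod_ge0.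
    lra.
  rewrite lerDr; apply: sumr_ge0 => l0 _.
  by apply: divr_ge0; [apply: mulr_ge0; [apply: cmod_ge0|apply: hA_ge0]|apply: cmod_ge0].
Qed.

Let s_gt0 j : 0 < s j.
Proof. by apply: divr_gt0. Qed.

Let s_le1 (j : 'I_n) : (0 < j)%N -> s j <= 1.
Proof.
move=> hj; rewrite /s ler_pdivrMr // mul1r.
case: hC => [[h0 h1]|[k [_ _ h2 h3]]].
- by case: (h1 j hj) => _ h _; rewrite /d; lra.
- case: (ltnP j k) => hj'; last by case: (h3 j hj') => _ h _; rewrite /d; lra.
  by rewrite h2 // addr0; apply: ltW; apply: nek.
Qed.

Let Bij i j : B i j = A i j * ((s j)%:C)%C.
Proof. by rewrite /B /Smat mul_mx_diag !mxE. Qed.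

Let cB i j : cmod (B i j) = cmod (A i j) * s j.
Proof. by rewrite Bij cmodM cmodR ger0_norm // ltW. Qed.

Let cBjj j : cmod (B j j) = hA A j + eps j.
Proof. rewrite cB /s /d mulrC divfK //; apply: lt0r_neq0; exact: d_gt0. Qed.

Let gfunB c k i : gfun B c k i = gfun A c k i.
Proof.
elim: k i => [//|k IH] i /=; congr (_ + _); apply: eq_bigr => j _.
rewrite IH !cB /=; field; apply/andP; split; apply: lt0r_neq0 => //; exact: d_gt0.
Qed.

Let zB i : zA B i = zA A i.
Proof. exact: gfunB. Qed.

Let hB_rec i : hA B i = \sum_(j : 'I_n | (j < i)%N) cmod (A i j) * hA B j / d j
   + \sum_(j : 'I_n | (i < j)%N) cmod (A i j) * s j.
Proof.
rewrite {1}/hA grec_eq -/(hA B); congr (_ + _); apply: eq_bigr => j _; rewrite !cB //.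
rewrite /d; field; apply/andP; split; apply: lt0r_neq0 => //; exact: d_gt0.
Qed.

Let E (i : 'I_n) := \sum_(j : 'I_n | (j < i)%N) cmod (A i j) * eps j / d j.
Let F (i : 'I_n) := \sum_(j : 'I_n | (i < j)%N) cmod (A i j) * (s j - 1).

Let hB_le (i : 'I_n) : (forall j : 'I_n, (j < i)%N -> hA B j <= hA A j + eps j) ->
  hA B i <= hA A i + E i + F i.
Proof.
move=> IH; rewrite hB_rec.
have hAe : hA A i = \sum_(j : 'I_n | (j < i)%N) cmod (A i j) * hA A j / d j
   + \sum_(j : 'I_n | (i < j)%N) cmod (A i j) by rewrite /hA grec_eq.
have e1 : \sum_(j : 'I_n | (j < i)%N) cmod (A i j) * hA B j / d j <=
    \sum_(j : 'I_n | (j < i)%N) cmod (A i j) * hA A j / d j + E i.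
  rewrite /E -big_split /=; apply: ler_sum => j hj.
  rewrite -mulrDl -mulrDr; apply: ler_wpM2r; first by rewrite invr_ge0 ltW.
  by apply: ler_wpM2l; [apply: cmod_ge0 | apply: IH].
have e2 : \sum_(j : 'I_n | (i < j)%N) cmod (A i j) * s j =
    \sum_(j : 'I_n | (i < j)%N) cmod (A i j) + F i.
  by rewrite /F -big_split /=; apply: eq_bigr => j _; ring.
rewrite hAe e2; lra.
Qed.

Let F_le0 i : F i <= 0.
Proof.
apply: sumr_le0 => j hj; apply: mulr_ge0_le0; first exact: cmod_ge0.
by rewrite subr_le0; apply: s_le1; apply: leq_ltn_trans hj.
Qed.

Lemma part1 i : hA B i < hA A i + eps i.
Proof.
suff H : forall k (i : 'I_n), (i < k)%N -> hA B i < hA A i + eps i.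
  by apply: (H n.+1 i); apply: leqW.
elim=> [//|k IH] {}i hik.
have hle := hB_le i (fun j hj => ltW (IH j (leq_trans hj hik))).
have Fi := F_le0 i.
suff : E i + F i < eps i by lra.
case: hC => [[h0 h1]|[k0 [hk0 hk hz hge]]].
- case: (posnP i) => hi.
  + rewrite /E big1 ?add0r; first by have := h0 i hi; lra.
    by move=> j; rewrite hi ltn0.
  + by case: (h1 i hi) => _ _ hE; rewrite /E; lra.
- case: (ltnP i k0) => hik'.
  + rewrite /E big1 ?add0r; last first.
      by move=> j hj; rewrite hz ?mulr0 ?mul0r // (ltn_trans hj hik').
    case: (hk i hik') => l [hl Al].
    rewrite /F (bigD1 l) //=.
    have cl : 0 < cmod (A i l).
      rewrite lt0r cmod_ge0 andbT; apply/eqP => /cmod_eq0 h; by rewrite h eqxx in Al.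
    have sl : s l < 1.
      rewrite /s ltr_pdivrMr // mul1r /d.
      case: (ltnP l k0) => hl'; last by case: (hge l hl') => _ h _; lra.
      by rewrite hz // addr0; apply: nek.
    have : cmod (A i l) * (s l - 1) < 0 by rewrite pmulr_rlt0 // subr_lt0.
    have : \sum_(j : 'I_n | (i < j)%N && (j != l)) cmod (A i j) * (s j - 1) <= 0.
      apply: sumr_le0 => j /andP [hj _]; apply: mulr_ge0_le0; first exact: cmod_ge0.
      by rewrite subr_le0; apply: s_le1; apply: leq_ltn_trans hj.
    have := eps_ge0 i; lra.
  + have eE : E i = \sum_(j : 'I_n | (k0 <= j < i)%N) cmod (A i j) * eps j / d j.
      rewrite /E (bigID (fun j : 'I_n => (k0 <= j)%N)) /=.
      rewrite [X in _ + X]big1 ?addr0; last first.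
        by move=> j /andP [_ hj]; rewrite hz ?mulr0 ?mul0r // ltnNge.
      by apply: eq_bigl => j; rewrite andbC.
    by case: (hge i hik') => _ _ hE; rewrite eE; lra.
Qed.

Let M := \big[Num.max/0]_(i < n) (zA A i / (hA A i + eps i - hA B i)).

Let appBound (x y : 'I_n -> R[i]) (Y : R) :
  (forall l, \sum_j A l j * x j = y l) -> (forall l, cmod (y l) <= Y) ->
  forall j, cmod (x j) <= s j * (M * Y).
Proof.
move=> hxy hy j.
have sC j0 : ((s j0)%:C)%C != 0 :> R[i].
  by rewrite eq_complex /= (gt_eqF (s_gt0 j0)).
pose w := fun j => x j / ((s j)%:C)%C.
have hw : forall l, \sum_j B l j * w j = y l.
  move=> l; rewrite -hxy; apply: eq_bigr => j0 _; rewrite Bij /w; field; exact: sC j0.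
have nekB : forall i, hA B i < cmod (B i i) by move=> i; rewrite cBjj; apply: part1.
have := @nek_bound _ _ _ _ _ nekB hw hy j.
have -> : \big[Num.max/0]_(j < n) (zA B j / (cmod (B j j) - hA B j)) = M.
  by apply: eq_bigr => j0 _; rewrite zB cBjj.
have -> : x j = w j * ((s j)%:C)%C by rewrite /w divfK.
rewrite cmodM cmodR ger0_norm; last exact: ltW.
by move=> h; rewrite mulrC; apply: ler_wpM2l => //; apply: ltW.
Qed.

Lemma unitA : A \in unitmx.
Proof.
rewrite unitmxE unitfE -det_tr; apply/negP => /det0P [v v0 hv].
have h : forall j, cmod (v 0 j) <= s j * (M * 0).
  apply: (appBound _ (fun _ => 0)) => [l|l]; last by rewrite cmod0.
  have := congr1 (fun m : 'M[R[i]]_(1, n) => m 0 l) hv; rewrite !mxE => h0.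
  transitivity (\sum_j v 0 j * A^T j l); last exact: h0.
  by apply: eq_bigr => j _; rewrite mxE mulrC.
move/negP: v0; apply; apply/eqP/matrixP => a b; rewrite (ord1 a) mxE.
apply: cmod_eq0; have := h b; have := cmod_ge0 (v 0 b); rewrite !mulr0; lra.
Qed.

Lemma part2 : infnorm (invmx A) <=
    (\big[Num.max/0]_(i < n) ((hA A i + eps i) / cmod (A i i))) * M.
Proof.
set C := invmx A.
apply: bigmax_le; first by apply: mulr_ge0; apply: bigmax_ge0.
move=> i.
pose y := fun k => ((cmod (C i k))%:C)%C / C i k.
have Cy k : C i k * y k = ((cmod (C i k))%:C)%C.
  rewrite /y; have [->|nz] := eqVneq (C i k) 0; first by rewrite cmod0 mul0r.
  by rewrite mulrC divfK.
have yb k : cmod (y k) <= 1.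
  rewrite /y cmodM cmodR ger0_norm ?cmod_ge0 // -cmodM.
  have [->|nz] := eqVneq (C i k) 0; first by rewrite invr0 mulr0 cmod0 ler01.
  by rewrite mulfV // cmod1.
pose x := fun j => \sum_k C j k * y k.
have hxy l : \sum_j A l j * x j = y l.
  rewrite /x.
  under eq_bigr do rewrite mulr_sumr.
  rewrite exchange_big /=.
  transitivity (\sum_k (A *m C) l k * y k).
    by apply: eq_bigr => k _; rewrite mxE mulr_suml; apply: eq_bigr => j _; rewrite mulrA.
  rewrite mulmxV; last exact: unitA.
  rewrite (bigD1 l) //= mxE eqxx mul1r big1 ?addr0 // => k hk.
  by rewrite mxE eq_sym (negbTE hk) mul0r.
have := appBound _ _ _ hxy yb i.
have -> : cmod (x i) = \sum_j cmod (C i j).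
  rewrite /x; under eq_bigr do rewrite Cy.
  rewrite -rmorph_sum cmodR ger0_norm //; apply: sumr_ge0 => *; apply: cmod_ge0.
move=> h; apply: le_trans h _; rewrite mulr1; apply: ler_wpM2r.
  by apply: bigmax_ge0.
have := @bigmax_ge _ (index_enum (ordinal n)) (fun j => (hA A j + eps j) / cmod (A j j)) i.
by rewrite mem_index_enum; apply.
Qed.

End Main.

End Aux.

Theorem mainTheorem5 (R : realType) (n : nat) (A : 'M[R[i]]_n)
  (eps : 'I_n -> R) :
  nekrasov A -> condC1 A eps \/ condC2 A eps ->
  (forall i : 'I_n, 0 < hA A i + eps i - hA (A *m Smat A eps) i) /\
  infnorm (invmx A) <=
    (\big[Num.max/0]_(i < n) ((hA A i + eps i) / cmod (A i i))) *
    (\big[Num.max/0]_(i < n)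
        (zA A i / (hA A i + eps i - hA (A *m Smat A eps) i))).
Proof.
move=> nek hC; split; last exact: part2.
by move=> i; rewrite subr_gt0; apply: part1.
Qed.
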